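(* Let $K$ be a nonempty finite set and $X=\Delta(K)$. Let $u,v$ be probabilities on $X$ with finite supports $U$ and $V$ respectively. Then $$d_*(u,v)=\sup_{f\in D_1}|u(f)-v(f)|=\min_{(\alpha,\beta)\in\mathcal M_4(u,v)}\sum_{(x,y)\in U\times V}\|\alpha(x,y)\,x-\beta(x,y)\,y\|_1,$$ and the minimum is attained.
   Context: $X=\Delta(K)\subset\mathbb R^K$ with $\|p\|_1=\sum_k|p^k|$, and $u(f)=\sum_{x\in U}u(x)f(x)$. $D_1=\{f\in\mathcal C(X):\ \forall x,y\in X,\ \forall a,b\ge0,\ af(x)-bf(y)\le\|ax-by\|_1\}$. $\mathcal M_4(u,v)$ is the set of pairs $(\alpha,\beta)\in(\mathbb R_+^{U\times V})^2$ such that: - $\sum_{y'\in V}\alpha(x,y')=u(x)$ for all $x\in U$, and - $\sum_{x'\in U}\beta(x',y)=v(y)$ for all $y\in V$. *)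

(* Defs.v *)
From Stdlib Require Import Reals List.
Import ListNotations.
Open Scope R_scope.

(* K = {0, ..., n-1}; a point of R^K is represented by p : nat -> R,
   points of X = Delta(K) are required to vanish outside K so that
   equality of points is equality of functions. *)
Definition point := nat -> R.

Fixpoint rsum (n : nat) (f : nat -> R) : R :=
  match n with
  | O => 0
  | S m => rsum m f + f m
  end.

Definition lsum {A : Type} (l : list A) (f : A -> R) : R :=
  fold_right (fun a s => f a + s) 0 l.

Definition l1 (n : nat) (p : point) : R := rsum n (fun k => Rabs (p k)).

Definition inX (n : nat) (p : point) : Prop :=
  (forall k, (k < n)%nat -> 0 <= p k) /\
  (forall k, (n <= k)%nat -> p k = 0) /\
  rsum n p = 1.

Definition contX (n : nat) (f : point -> R) : Prop :=
  forall x, inX n x -> forall eps, 0 < eps ->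
    exists delta, 0 < delta /\
      forall y, inX n y -> l1 n (fun k => x k - y k) < delta ->
        Rabs (f x - f y) < eps.

Definition inD1 (n : nat) (f : point -> R) : Prop :=
  contX n f /\
  forall x y, inX n x -> inX n y -> forall a b, 0 <= a -> 0 <= b ->
    a * f x - b * f y <= l1 n (fun k => a * x k - b * y k).

Definition fin_prob (n : nat) (U : list point) (u : point -> R) : Prop :=
  NoDup U /\ (forall x, In x U -> inX n x /\ 0 < u x) /\ lsum U u = 1.

Definition integ (U : list point) (u : point -> R) (f : point -> R) : R :=
  lsum U (fun x => u x * f x).

Definition M4 (U V : list point) (u v : point -> R)
    (alpha beta : point -> point -> R) : Prop :=
  (forall x y, In x U -> In y V -> 0 <= alpha x y /\ 0 <= beta x y) /\
  (forall x, In x U -> lsum V (fun y => alpha x y) = u x) /\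
  (forall y, In y V -> lsum U (fun x => beta x y) = v y).

Definition cost (n : nat) (U V : list point)
    (alpha beta : point -> point -> R) : R :=
  lsum U (fun x => lsum V (fun y =>
    l1 n (fun k => alpha x y * x k - beta x y * y k))).

Definition dstar_is (n : nat) (U V : list point) (u v : point -> R) (d : R) : Prop :=
  is_lub (fun r => exists f, inD1 n f /\
                     r = Rabs (integ U u f - integ V v f)) d.

(* Main.v *)
Require Import Defs.
From Stdlib Require Import Reals List Lra Lia ClassicalEpsilon.
Import ListNotations.
Open Scope R_scope.

Definition dec {A : Type} (x y : A) : {x = y} + {x <> y} :=
  excluded_middle_informative (x = y).

Section LS.
Context {A : Type}.
Lemma lsum_nil (f : A -> R) : lsum [] f = 0. Proof. reflexivity. Qed.
Lemma lsum_cons a l (f : A -> R) : lsum (a::l) f = f a + lsum l f. Proof. reflexivity. Qed.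
Lemma lsum_app l1 l2 (f : A -> R) : lsum (l1++l2) f = lsum l1 f + lsum l2 f.
Proof. induction l1; simpl app; rewrite ?lsum_cons, ?lsum_nil; [lra|rewrite IHl1; lra]. Qed.
Lemma lsum_ext l (f g : A -> R) : (forall a, In a l -> f a = g a) -> lsum l f = lsum l g.
Proof. induction l; intros H; rewrite ?lsum_cons, ?lsum_nil; auto.
  rewrite H by (simpl; auto). rewrite IHl; auto. intros; apply H; simpl; auto. Qed.
Lemma lsum_le l (f g : A -> R) : (forall a, In a l -> f a <= g a) -> lsum l f <= lsum l g.
Proof. induction l; intros H; rewrite ?lsum_cons, ?lsum_nil; [lra|].
  assert (f a <= g a) by (apply H; simpl; auto).
  assert (lsum l f <= lsum l g) by (apply IHl; intros; apply H; simpl; auto). lra. Qed.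
Lemma lsum_plus l (f g : A -> R) : lsum l (fun a => f a + g a) = lsum l f + lsum l g.
Proof. induction l; rewrite ?lsum_cons, ?lsum_nil; [lra|rewrite IHl; lra]. Qed.
Lemma lsum_scal l c (f : A -> R) : lsum l (fun a => c * f a) = c * lsum l f.
Proof. induction l; rewrite ?lsum_cons, ?lsum_nil; [lra|rewrite IHl; lra]. Qed.
Lemma lsum_opp l (f : A -> R) : lsum l (fun a => - f a) = - lsum l f.
Proof. induction l; rewrite ?lsum_cons, ?lsum_nil; [lra|rewrite IHl; lra]. Qed.
Lemma lsum_minus l (f g : A -> R) : lsum l (fun a => f a - g a) = lsum l f - lsum l g.
Proof. induction l; rewrite ?lsum_cons, ?lsum_nil; [lra|rewrite IHl; lra]. Qed.
Lemma lsum_0 l : lsum l (fun _ : A => 0) = 0.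
Proof. induction l; rewrite ?lsum_cons, ?lsum_nil; [lra|rewrite IHl; lra]. Qed.
Lemma lsum_nonneg l (f : A -> R) : (forall a, In a l -> 0 <= f a) -> 0 <= lsum l f.
Proof. intros H. rewrite <- (lsum_0 l). apply lsum_le; auto. Qed.
Lemma lsum_ind l (a : A) (g : A -> R) : NoDup l -> In a l ->
  lsum l (fun x => if dec x a then g x else 0) = g a.
Proof. induction l as [|b l IH]; intros ND Hin; [destruct Hin|].
  rewrite lsum_cons. inversion ND; subst. destruct Hin as [<-|Hin].
  - destruct (dec b b) as [_|C]; [|congruence].
    rewrite (lsum_ext l _ (fun _ => 0)); [rewrite lsum_0; lra|].
    intros x Hx; destruct (dec x b); subst; tauto.
  - destruct (dec b a) as [->|_]; [tauto|]. rewrite IH; auto; lra. Qed.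
End LS.

Lemma lsum_map {A B} l (g : A -> B) (f : B -> R) : lsum (map g l) f = lsum l (fun a => f (g a)).
Proof. induction l; simpl map; rewrite ?lsum_cons, ?lsum_nil; [lra|rewrite IHl; lra]. Qed.
Lemma lsum_flat_map {A B} l (g : A -> list B) (f : B -> R) :
  lsum (flat_map g l) f = lsum l (fun a => lsum (g a) f).
Proof. induction l; simpl flat_map; rewrite ?lsum_cons, ?lsum_nil, ?lsum_app; [lra|rewrite IHl; lra]. Qed.
Lemma lsum_swap {A B} (l1 : list A) (l2 : list B) f :
  lsum l1 (fun a => lsum l2 (fun b => f a b)) = lsum l2 (fun b => lsum l1 (fun a => f a b)).
Proof. induction l1; rewrite ?lsum_cons, ?lsum_nil. - rewrite lsum_0; auto.
  - rewrite IHl1, <- lsum_plus. reflexivity. Qed.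

Lemma rsum_lsum n f : rsum n f = lsum (seq 0 n) f.
Proof. induction n; [reflexivity|]. rewrite seq_S, lsum_app; simpl rsum. rewrite IHn.
  rewrite lsum_cons, lsum_nil. simpl. lra. Qed.

Definition cstr (J : Type) := ((J -> R) * R)%type.
Definition lhs {J} (Js : list J) (a : J -> R) (x : J -> R) := lsum Js (fun j => a j * x j).

Inductive Der {J} (S : list (cstr J)) : cstr J -> Prop :=
| Der_in c : In c S -> Der S c
| Der_scale c t : Der S c -> 0 <= t -> Der S (fun j => t * fst c j, t * snd c)
| Der_add c d : Der S c -> Der S d -> Der S (fun j => fst c j + fst d j, snd c + snd d).

Lemma Der_trans {J} (S S' : list (cstr J)) c :
  (forall d, In d S' -> Der S d) -> Der S' c -> Der S c.
Proof. intros H D; induction D. auto. apply Der_scale; auto. apply Der_add; auto. Qed.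

Lemma Der_zero {J} S (j0 : J) : (forall d, In d S -> fst d j0 = 0) ->
  forall c, Der S c -> fst c j0 = 0.
Proof. intros H c D; induction D; simpl; auto. rewrite IHD; lra. rewrite IHD1, IHD2; lra. Qed.

Lemma low_bound {A} (P : list A) hi : exists v, forall p, In p P -> v <= hi p.
Proof. induction P as [|a P [v Hv]]. exists 0; intros p []. exists (Rmin (hi a) v).
  intros p [<-|Hp]. apply Rmin_l. eapply Rle_trans; [apply Rmin_r|auto]. Qed.

Lemma find_between {A} (N P : list A) lo hi :
  (forall q p, In q N -> In p P -> lo q <= hi p) ->
  exists v, (forall q, In q N -> lo q <= v) /\ (forall p, In p P -> v <= hi p).
Proof. induction N as [|a N IH]; intros H.
  - destruct (low_bound P hi) as [v Hv]. exists v; split; auto. intros q [].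
  - destruct IH as [v [H1 H2]]. intros; apply H; simpl; auto.
    exists (Rmax (lo a) v). split.
    + intros q [<-|Hq]. apply Rmax_l. eapply Rle_trans; [apply H1; auto|apply Rmax_r].
    + intros p Hp. apply Rmax_lub. apply H; simpl; auto. auto. Qed.

Lemma lhs_cons {J} (j0 : J) Js a x v : ~ In j0 Js ->
  lhs (j0 :: Js) a (fun j => if dec j j0 then v else x j) = a j0 * v + lhs Js a x.
Proof. intros Hn. unfold lhs. rewrite lsum_cons. destruct (dec j0 j0); [|congruence].
  f_equal. apply lsum_ext. intros j Hj. destruct (dec j j0); subst; tauto. Qed.

Lemma lhs_lin {J} Js (a b : J -> R) s t x :
  lhs Js (fun j => s * a j + t * b j) x = s * lhs Js a x + t * lhs Js b x.
Proof. unfold lhs. rewrite <- !lsum_scal, <- lsum_plus. apply lsum_ext; intros; ring. Qed.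

Theorem farkas {J} (Js : list J) : NoDup Js -> forall S : list (cstr J),
  (exists x, forall c, In c S -> lhs Js (fst c) x <= snd c) \/
  (exists c, Der S c /\ (forall j, In j Js -> fst c j = 0) /\ snd c < 0).
Proof.
  induction Js as [|j0 Js IH]; intros ND S.
  - destruct (classic (exists c, In c S /\ snd c < 0)) as [[c [Hc Hn]]|Hn].
    + right. exists c. split; [constructor; auto|split; auto]. intros j [].
    + left. exists (fun _ => 0). intros c Hc. unfold lhs; rewrite lsum_nil.
      destruct (Rle_dec 0 (snd c)); auto. exfalso; apply Hn; exists c; split; auto; lra.
  - inversion ND as [|? ? Hnin ND']; subst.
    set (Z := filter (fun c : cstr J => if Req_EM_T (fst c j0) 0 then true else false) S).
    set (P := filter (fun c : cstr J => if Rlt_dec 0 (fst c j0) then true else false) S).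
    set (N := filter (fun c : cstr J => if Rlt_dec (fst c j0) 0 then true else false) S).
    set (comb := fun (p q : cstr J) => ((fun j => (- fst q j0) * fst p j + fst p j0 * fst q j),
                                       (- fst q j0) * snd p + fst p j0 * snd q) : cstr J).
    set (S' := Z ++ flat_map (fun p => map (comb p) N) P).
    assert (HZ : forall c, In c Z <-> In c S /\ fst c j0 = 0).
    { intros c; unfold Z; rewrite filter_In. destruct (Req_EM_T (fst c j0) 0); intuition congruence. }
    assert (HP : forall c, In c P <-> In c S /\ 0 < fst c j0).
    { intros c; unfold P; rewrite filter_In. destruct (Rlt_dec 0 (fst c j0)); intuition congruence. }
    assert (HN : forall c, In c N <-> In c S /\ fst c j0 < 0).
    { intros c; unfold N; rewrite filter_In. destruct (Rlt_dec (fst c j0) 0); intuition congruence. }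
    assert (HS' : forall d, In d S' <-> In d Z \/ exists p q, In p P /\ In q N /\ d = comb p q).
    { intros d; unfold S'; rewrite in_app_iff, in_flat_map. split.
      - intros [H|[p [Hp Hd]]]; auto. rewrite in_map_iff in Hd. destruct Hd as [q [<- Hq]].
        right; exists p, q; auto.
      - intros [H|[p [q [Hp [Hq ->]]]]]; auto. right. exists p; split; auto. apply in_map; auto. }
    destruct (IH ND' S') as [[x' Hx']|[c [Dc [Hc0 Hcn]]]].
    + left.
      set (L := fun c : cstr J => lhs Js (fst c) x').
      destruct (find_between N P (fun q => (snd q - L q) / fst q j0)
                  (fun p => (snd p - L p) / fst p j0)) as [v [Hlo Hhi]].
      { intros q p Hq Hp.
        assert (Hc : lhs Js (fst (comb p q)) x' <= snd (comb p q)).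
        { apply Hx'. apply HS'. right. exists p, q. auto. }
        apply HN in Hq as [_ Hq]. apply HP in Hp as [_ Hp].
        unfold comb in Hc; simpl in Hc. rewrite lhs_lin in Hc. fold (L p) (L q) in Hc.
        set (aq := fst q j0) in *. set (ap := fst p j0) in *.
        set (X := (snd q - L q) / aq). set (Y := (snd p - L p) / ap).
        assert (EX : snd q - L q = aq * X) by (unfold X; field; lra).
        assert (EY : snd p - L p = ap * Y) by (unfold Y; field; lra).
        assert (0 <= ap * (- aq) * (Y - X)) by nra.
        assert (0 < ap * (- aq)) by nra. nra. }
      exists (fun j => if dec j j0 then v else x' j). intros c Hc.
      rewrite lhs_cons by auto. fold (L c).
      destruct (total_order_T (fst c j0) 0) as [[Hl|He]|Hg].
      * assert (Hq : In c N) by (apply HN; auto). specialize (Hlo c Hq).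
        assert (E : snd c - L c = fst c j0 * ((snd c - L c) / fst c j0)) by (field; lra).
        assert (fst c j0 * v <= fst c j0 * ((snd c - L c) / fst c j0)).
        { apply Rmult_le_compat_neg_l; lra. } lra.
      * rewrite He. assert (In c S') by (apply HS'; left; apply HZ; auto).
        specialize (Hx' c H). unfold L; lra.
      * assert (Hp : In c P) by (apply HP; auto). specialize (Hhi c Hp).
        assert (E : snd c - L c = fst c j0 * ((snd c - L c) / fst c j0)) by (field; lra).
        assert (fst c j0 * v <= fst c j0 * ((snd c - L c) / fst c j0)).
        { apply Rmult_le_compat_l; lra. } lra.
    + right. exists c. split; [|split; auto].
      * eapply Der_trans; [|exact Dc]. intros d Hd. apply HS' in Hd as [Hd|[p [q [Hp [Hq ->]]]]].
        -- constructor. apply HZ; auto.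
        -- apply HP in Hp as [Hp Hp0]. apply HN in Hq as [Hq Hq0].
           apply (Der_add S (fun j => (- fst q j0) * fst p j, (- fst q j0) * snd p)
                    (fun j => fst p j0 * fst q j, fst p j0 * snd q)).
           apply (Der_scale S p); [constructor; auto|lra].
           apply (Der_scale S q); [constructor; auto|lra].
      * intros j [<-|Hj]; auto. apply (Der_zero S'); auto.
        intros d Hd. apply HS' in Hd as [Hd|[p [q [Hp [Hq ->]]]]].
        -- apply HZ; auto.
        -- simpl; ring.
Qed.

Lemma Rdiv_nonneg a b : 0 <= a -> 0 < b -> 0 <= a / b.
Proof. intros; unfold Rdiv; apply Rmult_le_pos; auto. left; apply Rinv_0_lt_compat; auto. Qed.

Lemma NoDup_map_inj {A B} (f : A -> B) l : (forall a b, f a = f b -> a = b) -> NoDup l -> NoDup (map f l).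
Proof. intros H ND. apply NoDup_map_NoDup_ForallPairs; auto. intros a b _ _; auto. Qed.

Lemma Der_mult {J I} (Is : list I) (F : I -> cstr J) : NoDup Is -> forall c,
  Der (map F Is) c -> exists lam : I -> R, (forall i, In i Is -> 0 <= lam i) /\
    (forall j, fst c j = lsum Is (fun i => lam i * fst (F i) j)) /\
    snd c = lsum Is (fun i => lam i * snd (F i)).
Proof.
  intros ND c D; induction D.
  - apply in_map_iff in H as [i0 [<- Hi0]].
    exists (fun i => if dec i i0 then 1 else 0). split; [intros i _; destruct (dec i i0); lra|].
    split; [intros j|];
    [rewrite <- (lsum_ind Is i0 (fun i => fst (F i) j)) by auto
    |rewrite <- (lsum_ind Is i0 (fun i => snd (F i))) by auto];
    apply lsum_ext; intros i _; destruct (dec i i0); lra.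
  - destruct IHD as [lam [H1 [H2 H3]]]. exists (fun i => t * lam i). split; [intros; apply Rmult_le_pos; auto|].
    split; [intros j; simpl; rewrite H2, <- lsum_scal|simpl; rewrite H3, <- lsum_scal];
    apply lsum_ext; intros; ring.
  - destruct IHD1 as [l1 [H1 [H2 H3]]]. destruct IHD2 as [l2 [G1 [G2 G3]]].
    exists (fun i => l1 i + l2 i). split; [intros; specialize (H1 i H); specialize (G1 i H); lra|].
    split; [intros j; simpl; rewrite H2, G2, <- lsum_plus|simpl; rewrite H3, G3, <- lsum_plus];
    apply lsum_ext; intros; ring.
Qed.

Section LP.
Context {J I : Type} (Js : list J) (Is : list I) (A : I -> J -> R) (b : I -> R) (c : J -> R).
Hypothesis NDJ : NoDup Js.
Hypothesis NDI : NoDup Is.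

Definition pfeas (x : J -> R) := forall i, In i Is -> lsum Js (fun j => A i j * x j) <= b i.
Definition dfeas (y : I -> R) := (forall i, In i Is -> 0 <= y i) /\
  (forall j, In j Js -> lsum Is (fun i => y i * A i j) + c j = 0).
Definition cobj (x : J -> R) := lsum Js (fun j => c j * x j).
Definition bobj (y : I -> R) := lsum Is (fun i => b i * y i).

Lemma weak_lp x y : pfeas x -> dfeas y -> 0 <= cobj x + bobj y.
Proof.
  intros Hx [Hy1 Hy2]. unfold cobj, bobj.
  rewrite (lsum_ext Js _ (fun j => - (lsum Is (fun i => y i * A i j) * x j))).
  2:{ intros j Hj. specialize (Hy2 j Hj). replace (c j) with (- lsum Is (fun i => y i * A i j)) by lra. ring. }
  rewrite lsum_opp.
  rewrite (lsum_ext Js _ (fun j => lsum Is (fun i => y i * (A i j * x j)))).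
  2:{ intros j _. rewrite Rmult_comm, <- lsum_scal. apply lsum_ext; intros; ring. }
  rewrite lsum_swap, <- lsum_opp, <- lsum_plus. apply lsum_nonneg. intros i Hi.
  rewrite lsum_scal. specialize (Hx i Hi). specialize (Hy1 i Hi). nra.
Qed.

Inductive cvar := vx (j : J) | vy (i : I).
Inductive cidx := c1 (i : I) | c2 (i : I) | c3 (j : J) | c4 (j : J) | c5.

Definition Fc (k : cidx) : cstr cvar :=
  match k with
  | c1 i => (fun v => match v with vx j => A i j | vy _ => 0 end, b i)
  | c2 i => (fun v => match v with vy i' => if dec i' i then -1 else 0 | vx _ => 0 end, 0)
  | c3 j => (fun v => match v with vy i => A i j | vx _ => 0 end, - c j)
  | c4 j => (fun v => match v with vy i => - A i j | vx _ => 0 end, c j)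
  | c5 => (fun v => match v with vx j => c j | vy i => b i end, 0)
  end.

Definition Vs := map vx Js ++ map vy Is.
Definition Cs := map c1 Is ++ map c2 Is ++ map c3 Js ++ map c4 Js ++ [c5].

Lemma lsum_Vs (f : cvar -> R) : lsum Vs f = lsum Js (fun j => f (vx j)) + lsum Is (fun i => f (vy i)).
Proof. unfold Vs. rewrite lsum_app, !lsum_map. reflexivity. Qed.
Lemma lsum_Cs (f : cidx -> R) : lsum Cs f = lsum Is (fun i => f (c1 i)) + lsum Is (fun i => f (c2 i))
  + lsum Js (fun j => f (c3 j)) + lsum Js (fun j => f (c4 j)) + f c5.
Proof. unfold Cs. rewrite !lsum_app, !lsum_map, lsum_cons, lsum_nil. ring. Qed.

Lemma ND_Vs : NoDup Vs.
Proof. unfold Vs. apply NoDup_app; try apply NoDup_map_inj; auto; try (intros ? ? E; inversion E; auto).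
  intros v H1 H2. apply in_map_iff in H1 as [? [<- _]]. apply in_map_iff in H2 as [? [E _]]. discriminate. Qed.
Lemma ND_Cs : NoDup Cs.
Proof. unfold Cs.
  repeat match goal with
  | |- NoDup (_ ++ _) => apply NoDup_app
  | |- NoDup (map _ _) => apply NoDup_map_inj; [intros ? ? E; inversion E; auto| auto]
  | |- NoDup [_] => constructor; [intros []| constructor]
  | |- forall a, In a _ -> ~ In a _ =>
      let a := fresh in let H1 := fresh in let H2 := fresh in
      intros a H1 H2; apply in_map_iff in H1 as [? [<- _]]; rewrite ?in_app_iff in H2;
      repeat (destruct H2 as [H2|H2]);
      try (apply in_map_iff in H2 as [? [E _]]; discriminate);
      try (destruct H2 as [E|[]]; discriminate); try discriminate; try contradiction
  end.
Qed.

Lemma lsum_zero_ext {T} (l : list T) f : (forall a, In a l -> f a = 0) -> lsum l f = 0.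
Proof. intros H. rewrite (lsum_ext l f (fun _ => 0)); auto. apply lsum_0. Qed.

Lemma lsum_ind' {T} l (a : T) (g : T -> R) : NoDup l -> In a l ->
  lsum l (fun x => if dec a x then g x else 0) = g a.
Proof. intros. rewrite <- (lsum_ind l a g) by auto. apply lsum_ext; intros x _.
  destruct (dec a x), (dec x a); subst; congruence. Qed.

Lemma strong_lp x0 y0 : pfeas x0 -> dfeas y0 ->
  exists x y, pfeas x /\ dfeas y /\ cobj x + bobj y <= 0.
Proof.
  intros Hx0 Hy0.
  assert (I1 : forall i, In i Is -> In (c1 i) Cs) by (intros; unfold Cs; rewrite !in_app_iff; left; apply in_map; auto).
  assert (I2 : forall i, In i Is -> In (c2 i) Cs) by (intros; unfold Cs; rewrite !in_app_iff; right; left; apply in_map; auto).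
  assert (I3 : forall j, In j Js -> In (c3 j) Cs) by (intros; unfold Cs; rewrite !in_app_iff; right; right; left; apply in_map; auto).
  assert (I4 : forall j, In j Js -> In (c4 j) Cs) by (intros; unfold Cs; rewrite !in_app_iff; right; right; right; left; apply in_map; auto).
  assert (I5 : In c5 Cs) by (unfold Cs; rewrite !in_app_iff; right; right; right; right; left; auto).
  destruct (farkas Vs ND_Vs (map Fc Cs)) as [[z Hz]|[cc [Dc [Hc0 Hcn]]]].
  - assert (Hz' : forall k, In k Cs -> lhs Vs (fst (Fc k)) z <= snd (Fc k)) by (intros; apply Hz, in_map; auto).
    exists (fun j => z (vx j)), (fun i => z (vy i)). split; [|split; [split|]].
    + intros i Hi. specialize (Hz' _ (I1 i Hi)). unfold lhs in Hz'; rewrite lsum_Vs in Hz'; simpl in Hz'.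
      rewrite (lsum_zero_ext Is) in Hz' by (intros; ring). lra.
    + intros i Hi. specialize (Hz' _ (I2 i Hi)). unfold lhs in Hz'; rewrite lsum_Vs in Hz'; simpl in Hz'.
      rewrite (lsum_zero_ext Js) in Hz' by (intros; ring).
      rewrite (lsum_ext Is _ (fun i' => if dec i' i then - z (vy i') else 0)) in Hz'.
      2:{ intros i' _. destruct (dec i' i); ring. }
      rewrite lsum_ind in Hz' by auto. lra.
    + intros j Hj. pose proof (Hz' _ (I3 j Hj)) as H3. pose proof (Hz' _ (I4 j Hj)) as H4.
      unfold lhs in H3, H4; rewrite lsum_Vs in H3, H4; simpl in H3, H4.
      rewrite (lsum_zero_ext Js) in H3, H4 by (intros; ring).
      rewrite (lsum_ext Is (fun i => - A i j * z (vy i)) (fun i => - (z (vy i) * A i j))), lsum_opp in H4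
        by (intros; ring).
      rewrite (lsum_ext Is (fun i => A i j * z (vy i)) (fun i => z (vy i) * A i j)) in H3 by (intros; ring).
      lra.
    + specialize (Hz' _ I5). unfold lhs in Hz'; rewrite lsum_Vs in Hz'; simpl in Hz'.
      unfold cobj, bobj. lra.
  - exfalso.
    destruct (Der_mult Cs Fc ND_Cs cc Dc) as [lam [Hl0 [Hl1 Hl2]]].
    set (mu := fun i => lam (c1 i)). set (tau := lam c5).
    set (w := fun j => lam (c3 j) - lam (c4 j)).
    assert (Ex : forall j, In j Js -> lsum Is (fun i => mu i * A i j) + tau * c j = 0).
    { intros j Hj. assert (H := Hc0 (vx j) ltac:(unfold Vs; rewrite in_app_iff; left; apply in_map; auto)).
      rewrite Hl1, lsum_Cs in H.
      simpl in H. rewrite (lsum_zero_ext Is (fun i => lam (c2 i) * 0)) in H by (intros; ring).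
      rewrite (lsum_zero_ext Js (fun i => lam (c3 i) * 0)) in H by (intros; ring).
      rewrite (lsum_zero_ext Js (fun i => lam (c4 i) * 0)) in H by (intros; ring).
      unfold mu, tau. lra. }
    assert (Ey : forall i, In i Is -> lsum Js (fun j => w j * A i j) + tau * b i = lam (c2 i)).
    { intros i Hi. assert (H := Hc0 (vy i) ltac:(unfold Vs; rewrite in_app_iff; right; apply in_map; auto)).
      rewrite Hl1, lsum_Cs in H.
      simpl in H. rewrite (lsum_zero_ext Is (fun i => lam (c1 i) * 0)) in H by (intros; ring).
      rewrite (lsum_ext Is _ (fun i' => if dec i i' then - lam (c2 i') else 0)) in H.
      2:{ intros i' _. destruct (dec i i'); ring. }
      rewrite lsum_ind' in H by auto.
      unfold w. rewrite (lsum_ext Js _ (fun j => lam (c3 j) * A i j + - (lam (c4 j) * A i j))) by (intros; ring).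
      rewrite lsum_plus, lsum_opp.
      rewrite (lsum_ext Js (fun j => lam (c4 j) * - A i j) (fun j => - (lam (c4 j) * A i j))), lsum_opp in H
        by (intros; ring).
      unfold tau. lra. }
    assert (Eb : lsum Is (fun i => mu i * b i) - lsum Js (fun j => w j * c j) < 0).
    { rewrite Hl2, lsum_Cs in Hcn. simpl in Hcn.
      rewrite (lsum_zero_ext Is (fun i => lam (c2 i) * 0)) in Hcn by (intros; ring).
      unfold w. rewrite (lsum_ext Js _ (fun j => lam (c3 j) * c j + - (lam (c4 j) * c j))) by (intros; ring).
      rewrite lsum_plus, lsum_opp.
      rewrite (lsum_ext Js (fun j => lam (c3 j) * - c j) (fun j => - (lam (c3 j) * c j))), lsum_opp in Hcn
        by (intros; ring).
      unfold mu. lra. }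
    assert (Htau : 0 <= tau) by (apply Hl0; auto).
    destruct (Rle_lt_or_eq_dec _ _ Htau) as [Tp|T0].
    + assert (Hw := weak_lp (fun j => - w j / tau) (fun i => mu i / tau)).
      assert (0 <= cobj (fun j => - w j / tau) + bobj (fun i => mu i / tau)).
      { apply Hw.
        - intros i Hi. rewrite (lsum_ext Js _ (fun j => (- / tau) * (w j * A i j))) by (intros; unfold Rdiv; ring).
          rewrite lsum_scal. specialize (Ey i Hi). assert (0 <= lam (c2 i)) by (apply Hl0; auto).
          assert (lsum Js (fun j => w j * A i j) = lam (c2 i) - tau * b i) as -> by lra.
          replace (- / tau * (lam (c2 i) - tau * b i)) with (b i - lam (c2 i) / tau) by (field; lra).
          assert (0 <= lam (c2 i) / tau) by (apply Rdiv_nonneg; lra). lra.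
        - split. intros i Hi. apply Rdiv_nonneg; [apply Hl0; auto|lra].
          intros j Hj. rewrite (lsum_ext Is _ (fun i => / tau * (mu i * A i j))) by (intros; unfold Rdiv; ring).
          rewrite lsum_scal. specialize (Ex j Hj).
          assert (lsum Is (fun i => mu i * A i j) = - (tau * c j)) as -> by lra. field; lra. }
      unfold cobj, bobj in H.
      rewrite (lsum_ext Js _ (fun j => (- / tau) * (w j * c j))) in H by (intros; unfold Rdiv; ring).
      rewrite (lsum_ext Is _ (fun i => (/ tau) * (mu i * b i))) in H by (intros; unfold Rdiv; ring).
      rewrite !lsum_scal in H.
      assert (0 <= / tau * (lsum Is (fun i => mu i * b i) - lsum Js (fun j => w j * c j))) by lra.
      assert (0 < / tau) by (apply Rinv_0_lt_compat; lra). nra.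
    + rewrite <- T0 in Ex, Ey.
      destruct (Rlt_or_le (lsum Is (fun i => mu i * b i)) 0) as [Hmb|Hmb].
      * assert (E0 : lsum Js (fun j => lsum Is (fun i => mu i * A i j) * x0 j) = 0).
        { apply lsum_zero_ext. intros j Hj. specialize (Ex j Hj). rewrite Rmult_0_l, Rplus_0_r in Ex. rewrite Ex; ring. }
        rewrite (lsum_ext Js _ (fun j => lsum Is (fun i => mu i * (A i j * x0 j)))) in E0.
        2:{ intros j _. rewrite Rmult_comm, <- lsum_scal. apply lsum_ext; intros; ring. }
        rewrite lsum_swap in E0. rewrite (lsum_ext Is _ (fun i => mu i * lsum Js (fun j => A i j * x0 j))) in E0
          by (intros; rewrite lsum_scal; auto).
        assert (lsum Is (fun i => mu i * lsum Js (fun j => A i j * x0 j)) <= lsum Is (fun i => mu i * b i)).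
        { apply lsum_le. intros i Hi. apply Rmult_le_compat_l. apply Hl0; auto. apply Hx0; auto. }
        lra.
      * set (d := lsum Js (fun j => w j * c j)).
        assert (Hd : 0 < d) by (unfold d; lra).
        set (s := (cobj x0 + bobj y0 + 1) / d).
        assert (Hs : 0 <= s).
        { unfold s. apply Rdiv_nonneg; [|lra]. pose proof (weak_lp x0 y0 Hx0 Hy0). lra. }
        assert (0 <= cobj (fun j => x0 j - s * w j) + bobj y0).
        { apply weak_lp; auto. intros i Hi.
          rewrite (lsum_ext Js _ (fun j => A i j * x0 j - s * (w j * A i j))) by (intros; ring).
          rewrite lsum_minus, lsum_scal. specialize (Ey i Hi). assert (0 <= lam (c2 i)) by (apply Hl0; auto).
          specialize (Hx0 i Hi). nra. }
        unfold cobj at 1 in H.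
        rewrite (lsum_ext Js _ (fun j => c j * x0 j - s * (w j * c j))) in H by (intros; ring).
        rewrite lsum_minus, lsum_scal in H. fold (cobj x0) d in H.
        replace (s * d) with (cobj x0 + bobj y0 + 1) in H by (unfold s; field; lra). lra.
Qed.
End LP.
From Stdlib Require Import Setoid Morphisms.

#[export] Instance lsum_proper {T} (l : list T) : Proper (pointwise_relation T eq ==> eq) (lsum l).
Proof. intros f g H. apply lsum_ext; intros; apply H. Qed.

Lemma lsum_pick {T} (l : list T) a f : NoDup l -> In a l ->
  (forall x, In x l -> x <> a -> f x = 0) -> lsum l f = f a.
Proof. induction l as [|b l IH]; intros ND Ha Hz; [destruct Ha|]. inversion ND; subst.
  rewrite lsum_cons. destruct Ha as [->|Ha].
  - rewrite lsum_zero_ext; [ring|]. intros x Hx; apply Hz; [right; auto|congruence].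
  - rewrite Hz; [|left; auto|congruence]. rewrite IH; auto; [ring|]. intros; apply Hz; [right|]; auto. Qed.

Lemma NoDup_flat_map {A B} (g : A -> list B) l : NoDup l -> (forall a, In a l -> NoDup (g a)) ->
  (forall a b z, In a l -> In b l -> a <> b -> In z (g a) -> ~ In z (g b)) -> NoDup (flat_map g l).
Proof. induction l as [|a l IH]; intros ND H1 H2; simpl; [constructor|]. inversion ND; subst.
  apply NoDup_app.
  - apply H1; left; auto.
  - apply IH; auto. intros; apply H1; right; auto. intros a0 b0 z ? ? ?; apply H2; try (right; assumption); auto.
  - intros z Hz Hz'. apply in_flat_map in Hz' as [b [Hb Hz']].
    apply (H2 a b z); auto. left; auto. right; auto. congruence. Qed.

Inductive pvar := VA (x y : point) | VB (x y : point) | VT (x y : point) (k : nat).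
Inductive pcon := C1 (x y : point) | C2 (x y : point) | C3 (x y : point) (k : nat) | C4 (x y : point) (k : nat)
  | C5 (x : point) | C6 (x : point) | C7 (y : point) | C8 (y : point).

Definition i1 (x x' : point) : R := if dec x' x then 1 else 0.
Definition i2 (x y x' y' : point) : R := if dec x' x then if dec y' y then 1 else 0 else 0.
Definition i3 (x y : point) k (x' y' : point) k' : R :=
  if dec x' x then if dec y' y then if Nat.eq_dec k' k then 1 else 0 else 0 else 0.

Definition Amat (i : pcon) (j : pvar) : R :=
  match i, j with
  | C1 x y, VA x' y' => - i2 x y x' y'
  | C2 x y, VB x' y' => - i2 x y x' y'
  | C3 x y k, VA x' y' => i2 x y x' y' * x k
  | C3 x y k, VB x' y' => - (i2 x y x' y' * y k)
  | C3 x y k, VT x' y' k' => - i3 x y k x' y' k'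
  | C4 x y k, VA x' y' => - (i2 x y x' y' * x k)
  | C4 x y k, VB x' y' => i2 x y x' y' * y k
  | C4 x y k, VT x' y' k' => - i3 x y k x' y' k'
  | C5 x, VA x' _ => i1 x x'
  | C6 x, VA x' _ => - i1 x x'
  | C7 y, VB _ y' => i1 y y'
  | C8 y, VB _ y' => - i1 y y'
  | _, _ => 0
  end.

Definition bvec (u v : point -> R) (i : pcon) : R :=
  match i with C5 x => u x | C6 x => - u x | C7 y => v y | C8 y => - v y | _ => 0 end.
Definition cvec (j : pvar) : R := match j with VT _ _ _ => 1 | _ => 0 end.

Section Conc.
Variables (n : nat) (U V : list point).
Hypothesis NDU : NoDup U.
Hypothesis NDV : NoDup V.

Definition Jl : list pvar :=
  flat_map (fun x => map (VA x) V) U ++ flat_map (fun x => map (VB x) V) U ++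
  flat_map (fun x => flat_map (fun y => map (VT x y) (seq 0 n)) V) U.
Definition Il : list pcon :=
  flat_map (fun x => map (C1 x) V) U ++ flat_map (fun x => map (C2 x) V) U ++
  flat_map (fun x => flat_map (fun y => map (C3 x y) (seq 0 n)) V) U ++
  flat_map (fun x => flat_map (fun y => map (C4 x y) (seq 0 n)) V) U ++
  map C5 U ++ map C6 U ++ map C7 V ++ map C8 V.

Lemma lsum_Jl f : lsum Jl f =
  lsum U (fun x => lsum V (fun y => f (VA x y))) + lsum U (fun x => lsum V (fun y => f (VB x y))) +
  lsum U (fun x => lsum V (fun y => lsum (seq 0 n) (fun k => f (VT x y k)))).
Proof. unfold Jl. rewrite !lsum_app, !lsum_flat_map. setoid_rewrite lsum_flat_map.
  setoid_rewrite lsum_map. ring. Qed.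

Lemma lsum_Il f : lsum Il f =
  lsum U (fun x => lsum V (fun y => f (C1 x y))) + lsum U (fun x => lsum V (fun y => f (C2 x y))) +
  lsum U (fun x => lsum V (fun y => lsum (seq 0 n) (fun k => f (C3 x y k)))) +
  lsum U (fun x => lsum V (fun y => lsum (seq 0 n) (fun k => f (C4 x y k)))) +
  lsum U (fun x => f (C5 x)) + lsum U (fun x => f (C6 x)) + lsum V (fun y => f (C7 y)) + lsum V (fun y => f (C8 y)).
Proof. unfold Il. rewrite !lsum_app, !lsum_flat_map. setoid_rewrite lsum_flat_map.
  setoid_rewrite lsum_map. ring. Qed.

Ltac unpack := repeat match goal with
 | H : In _ (_ ++ _) |- _ => apply in_app_iff in H; destruct H as [H|H]
 | H : In _ (flat_map _ _) |- _ => apply in_flat_map in H; destruct H as [? [? H]]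
 | H : In _ (map _ _) |- _ => apply in_map_iff in H; destruct H as [? [? H]]
 end.

Ltac nd := repeat match goal with
  | |- NoDup (_ ++ _) => apply NoDup_app
  | |- NoDup (flat_map _ _) => apply NoDup_flat_map
  | |- NoDup (map _ _) => apply NoDup_map_inj; [intros ? ? E; inversion E; auto|]
  | |- NoDup (seq _ _) => apply seq_NoDup
  | |- NoDup _ => assumption
  | |- forall a, In a _ -> NoDup _ => intros
  | |- forall a b z, _ -> _ -> _ -> _ -> ~ _ => let H := fresh in intros ? ? ? ? ? ? ? H; unpack; subst; congruence
  | |- forall a, In a _ -> ~ In a _ => let H := fresh in let H' := fresh in intros ? H H'; unpack; subst; congruence
  end.

Lemma ND_Jl : NoDup Jl.
Proof. unfold Jl. nd. Qed.
Lemma ND_Il : NoDup Il.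
Proof. unfold Il. nd. Qed.

Ltac z_tac := intros; unfold i1, i2, i3 in *;
  first [ apply lsum_zero_ext; z_tac
        | repeat match goal with |- context [dec ?a ?b] => destruct (dec a b) end;
          repeat match goal with |- context [Nat.eq_dec ?a ?b] => destruct (Nat.eq_dec a b) end;
          try congruence; ring ].
Ltac pk l a := rewrite (lsum_pick l a); [ | assumption | assumption | z_tac ].
Ltac fin_tac := unfold i1, i2, i3;
  repeat match goal with |- context [dec ?a ?b] => destruct (dec a b) end;
  repeat match goal with |- context [Nat.eq_dec ?a ?b] => destruct (Nat.eq_dec a b) end;
  try congruence; ring.

Definition row (i : pcon) (xv : pvar -> R) := lsum Jl (fun j => Amat i j * xv j).
Definition col (j : pvar) (yv : pcon -> R) := lsum Il (fun i => yv i * Amat i j).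

Section Rows.
Variables (x y : point) (k : nat) (xv : pvar -> R) (yv : pcon -> R).
Hypothesis Hx : In x U.
Hypothesis Hy : In y V.
Hypothesis Hk : In k (seq 0 n).
Hypothesis NDs : NoDup (seq 0 n).

Ltac rowt := unfold row; rewrite lsum_Jl; cbn [Amat]; try setoid_rewrite Rmult_0_l;
  repeat setoid_rewrite lsum_0.
Ltac colt := unfold col; rewrite lsum_Il; cbn [Amat]; try setoid_rewrite Rmult_0_r;
  repeat setoid_rewrite lsum_0.

Lemma i2r a b : i2 a b a b = 1.
Proof. unfold i2; destruct (dec a a), (dec b b); congruence. Qed.
Lemma i1r a : i1 a a = 1.
Proof. unfold i1; destruct (dec a a); congruence. Qed.
Lemma i3r a b c : i3 a b c a b c = 1.
Proof. unfold i3; destruct (dec a a), (dec b b), (Nat.eq_dec c c); congruence. Qed.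

Lemma R1 : row (C1 x y) xv = - xv (VA x y).
Proof. rowt. repeat first [pk U x | pk V y]. fin_tac. Qed.
Lemma R2 : row (C2 x y) xv = - xv (VB x y).
Proof. rowt. repeat first [pk U x | pk V y]. fin_tac. Qed.
Lemma R3 : row (C3 x y k) xv = xv (VA x y) * x k - xv (VB x y) * y k - xv (VT x y k).
Proof. rowt. repeat first [pk U x | pk V y | pk (seq 0 n) k]. fin_tac. Qed.
Lemma R4 : row (C4 x y k) xv = - xv (VA x y) * x k + xv (VB x y) * y k - xv (VT x y k).
Proof. rowt. repeat first [pk U x | pk V y | pk (seq 0 n) k]. fin_tac. Qed.
Lemma R5 : row (C5 x) xv = lsum V (fun y' => xv (VA x y')).
Proof. rowt. pk U x. unfold i1. destruct (dec x x); [|congruence]. setoid_rewrite Rmult_1_l. ring. Qed.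
Lemma R6 : row (C6 x) xv = - lsum V (fun y' => xv (VA x y')).
Proof. rowt. pk U x. unfold i1. destruct (dec x x); [|congruence]. rewrite <- lsum_opp. rewrite (lsum_ext V (fun y => - (1) * xv (VA x y)) (fun a => - xv (VA x a))) by (intros; ring). ring. Qed.

Lemma R7 : row (C7 y) xv = lsum U (fun x' => xv (VB x' y)).
Proof. rowt. rewrite lsum_swap. pk V y. rewrite i1r. setoid_rewrite Rmult_1_l. ring. Qed.
Lemma R8 : row (C8 y) xv = - lsum U (fun x' => xv (VB x' y)).
Proof. rowt. rewrite lsum_swap. pk V y. rewrite i1r. rewrite <- lsum_opp.
  rewrite (lsum_ext U (fun x' => - (1) * xv (VB x' y)) (fun a => - xv (VB a y))) by (intros; ring). ring. Qed.

Ltac colfin := rewrite ?i1r, ?i2r, ?i3r; try setoid_rewrite Rmult_1_l;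
  try setoid_rewrite <- Ropp_mult_distr_r; rewrite ?lsum_opp; ring.

Lemma CA : col (VA x y) yv = - yv (C1 x y) + lsum (seq 0 n) (fun k => yv (C3 x y k) * x k)
  - lsum (seq 0 n) (fun k => yv (C4 x y k) * x k) + yv (C5 x) - yv (C6 x).
Proof. colt. repeat first [pk U x | pk V y]. colfin. Qed.
Lemma CB : col (VB x y) yv = - yv (C2 x y) - lsum (seq 0 n) (fun k => yv (C3 x y k) * y k)
  + lsum (seq 0 n) (fun k => yv (C4 x y k) * y k) + yv (C7 y) - yv (C8 y).
Proof. colt. repeat first [pk U x | pk V y]. colfin. Qed.
Lemma CT : col (VT x y k) yv = - yv (C3 x y k) - yv (C4 x y k).
Proof. colt. repeat first [pk U x | pk V y | pk (seq 0 n) k]. rewrite !i3r. ring. Qed.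
End Rows.
End Conc.

Section Good.
Variable n : nat.
Definition Dif (p q : point) : point := fun k => p k - q k.
Definition good (g : point -> R) :=
  (forall p q, g p - g q <= l1 n (Dif p q)) /\
  (forall a p, 0 <= a -> g (fun k => a * p k) = a * g p).

Lemma l1_sym p q : l1 n (Dif p q) = l1 n (Dif q p).
Proof. unfold l1, Dif. rewrite !rsum_lsum. apply lsum_ext; intros. apply Rabs_minus_sym. Qed.

Lemma good_lip g : good g -> forall p q, Rabs (g p - g q) <= l1 n (Dif p q).
Proof. intros [H _] p q. apply Rabs_le. split; [|apply H]. rewrite l1_sym. specialize (H q p). lra. Qed.

Lemma good_D1 g : good g -> inD1 n g.
Proof. intros Hg. split.
  - intros x _ eps He. exists eps. split; auto. intros y _ Hy.
    eapply Rle_lt_trans; [apply good_lip; auto|]. exact Hy.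
  - intros x y _ _ a b Ha Hb. destruct Hg as [H1 H2].
    rewrite <- (H2 a x Ha), <- (H2 b y Hb). apply H1. Qed.

Definition lin (lam : nat -> R) (p : point) := rsum n (fun k => lam k * p k).

Lemma lin_good lam : (forall k, (k < n)%nat -> Rabs (lam k) <= 1) -> good (lin lam).
Proof. intros H. split.
  - intros p q. unfold lin, l1, Dif. rewrite !rsum_lsum, <- lsum_minus. apply lsum_le.
    intros k Hk. apply in_seq in Hk. specialize (H k ltac:(lia)).
    replace (lam k * p k - lam k * q k) with (lam k * (p k - q k)) by ring.
    eapply Rle_trans; [apply Rle_abs|]. rewrite Rabs_mult.
    rewrite <- (Rmult_1_l (Rabs (p k - q k))) at 2. apply Rmult_le_compat_r; auto. apply Rabs_pos.
  - intros a p Ha. unfold lin. rewrite !rsum_lsum, <- lsum_scal. apply lsum_ext; intros; ring. Qed.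

Lemma Rmax_scal a x y : 0 <= a -> Rmax (a * x) (a * y) = a * Rmax x y.
Proof. intros Ha. unfold Rmax. destruct (Rle_dec (a*x) (a*y)), (Rle_dec x y); try nra.
  all: destruct Ha as [Ha|<-]; [|ring]; exfalso; match goal with H : ~ _ |- _ => apply H end;
  try (apply Rmult_le_reg_l with a; auto); nra. Qed.
Lemma Rmin_scal a x y : 0 <= a -> Rmin (a * x) (a * y) = a * Rmin x y.
Proof. intros Ha. unfold Rmin. destruct (Rle_dec (a*x) (a*y)), (Rle_dec x y); try nra.
  all: destruct Ha as [Ha|<-]; [|ring]; exfalso; match goal with H : ~ _ |- _ => apply H end;
  try (apply Rmult_le_reg_l with a; auto); nra. Qed.

Lemma max_good g1 g2 : good g1 -> good g2 -> good (fun p => Rmax (g1 p) (g2 p)).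
Proof. intros [A1 B1] [A2 B2]. split.
  - intros p q. specialize (A1 p q). specialize (A2 p q).
    unfold Rmax. destruct (Rle_dec (g1 p) (g2 p)), (Rle_dec (g1 q) (g2 q)); lra.
  - intros a p Ha. rewrite B1, B2 by auto. apply Rmax_scal; auto. Qed.
Lemma min_good g1 g2 : good g1 -> good g2 -> good (fun p => Rmin (g1 p) (g2 p)).
Proof. intros [A1 B1] [A2 B2]. split.
  - intros p q. specialize (A1 p q). specialize (A2 p q).
    unfold Rmin. destruct (Rle_dec (g1 p) (g2 p)), (Rle_dec (g1 q) (g2 q)); lra.
  - intros a p Ha. rewrite B1, B2 by auto. apply Rmin_scal; auto. Qed.

Fixpoint lmax {A} (d : point -> R) (l : list A) (g : A -> point -> R) (p : point) : R :=
  match l with [] => d p | a :: l' => Rmax (g a p) (lmax d l' g p) end.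
Fixpoint lmin {A} (d : point -> R) (l : list A) (g : A -> point -> R) (p : point) : R :=
  match l with [] => d p | a :: l' => Rmin (g a p) (lmin d l' g p) end.

Lemma lmax_good {A} d (l : list A) g : good d -> (forall a, In a l -> good (g a)) -> good (lmax d l g).
Proof. induction l; intros Hd Hg; simpl; auto.
  apply (max_good (g a) (lmax d l g)). apply Hg; left; auto. apply IHl; auto. intros; apply Hg; right; auto. Qed.
Lemma lmin_good {A} d (l : list A) g : good d -> (forall a, In a l -> good (g a)) -> good (lmin d l g).
Proof. induction l; intros Hd Hg; simpl; auto.
  apply (min_good (g a) (lmin d l g)). apply Hg; left; auto. apply IHl; auto. intros; apply Hg; right; auto. Qed.

Lemma lmax_ge {A} d (l : list A) g p a : In a l -> g a p <= lmax d l g p.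
Proof. induction l as [|b l IH]; intros Hin; [destruct Hin|]; destruct Hin as [<-|H]; simpl. apply Rmax_l. eapply Rle_trans; [apply IH; auto|apply Rmax_r]. Qed.
Lemma lmax_le {A} d (l : list A) g p M : d p <= M -> (forall a, In a l -> g a p <= M) -> lmax d l g p <= M.
Proof. induction l; intros Hd H; simpl; auto. apply Rmax_lub. apply H; left; auto. apply IHl; auto. intros; apply H; right; auto. Qed.
Lemma lmin_le {A} d (l : list A) g p a : In a l -> lmin d l g p <= g a p.
Proof. induction l as [|b l IH]; intros Hin; [destruct Hin|]; destruct Hin as [<-|H]; simpl. apply Rmin_l. eapply Rle_trans; [apply Rmin_r|apply IH; auto]. Qed.
Lemma lmin_ge {A} d (l : list A) g p M : M <= d p -> (forall a, In a l -> M <= g a p) -> M <= lmin d l g p.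
Proof. induction l; intros Hd H; simpl; auto. apply Rmin_glb. apply H; left; auto. apply IHl; auto. intros; apply H; right; auto. Qed.
End Good.

Ltac unpack := repeat match goal with
 | H : In _ (_ ++ _) |- _ => apply in_app_iff in H; destruct H as [H|H]
 | H : In _ (flat_map _ _) |- _ => apply in_flat_map in H; destruct H as [? [? H]]
 | H : In _ (map _ _) |- _ => apply in_map_iff in H; destruct H as [? [? H]]
 end.

Lemma Il_cases n U V i : In i (Il n U V) ->
  (exists x y, In x U /\ In y V /\ i = C1 x y) \/
  (exists x y, In x U /\ In y V /\ i = C2 x y) \/
  (exists x y k, In x U /\ In y V /\ In k (seq 0 n) /\ i = C3 x y k) \/
  (exists x y k, In x U /\ In y V /\ In k (seq 0 n) /\ i = C4 x y k) \/
  (exists x, In x U /\ i = C5 x) \/ (exists x, In x U /\ i = C6 x) \/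
  (exists y, In y V /\ i = C7 y) \/ (exists y, In y V /\ i = C8 y).
Proof. unfold Il; intros H; unpack; subst.
  left; eauto 6. right; left; eauto 6. do 2 right; left; eauto 8. do 3 right; left; eauto 8.
  do 4 right; left; eauto. do 5 right; left; eauto. do 6 right; left; eauto. do 7 right; eauto. Qed.

Lemma Jl_cases n U V j : In j (Jl n U V) ->
  (exists x y, In x U /\ In y V /\ j = VA x y) \/
  (exists x y, In x U /\ In y V /\ j = VB x y) \/
  (exists x y k, In x U /\ In y V /\ In k (seq 0 n) /\ j = VT x y k).
Proof. unfold Jl; intros H; unpack; subst. left; eauto 6. right; left; eauto 6. right; right; eauto 8. Qed.

Lemma Il_in n U V : forall x y k, In x U -> In y V -> In k (seq 0 n) ->
  In (C1 x y) (Il n U V) /\ In (C2 x y) (Il n U V) /\ In (C3 x y k) (Il n U V) /\ In (C4 x y k) (Il n U V)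
  /\ In (C5 x) (Il n U V) /\ In (C6 x) (Il n U V) /\ In (C7 y) (Il n U V) /\ In (C8 y) (Il n U V).
Proof. intros x y k Hx Hy Hk. unfold Il. rewrite !in_app_iff, !in_flat_map.
  repeat split.
  - left. exists x; split; auto; apply in_map; auto.
  - right; left. exists x; split; auto; apply in_map; auto.
  - do 2 right; left. exists x; split; auto. apply in_flat_map. exists y; split; auto; apply in_map; auto.
  - do 3 right; left. exists x; split; auto. apply in_flat_map. exists y; split; auto; apply in_map; auto.
  - do 4 right; left. apply in_map; auto.
  - do 5 right; left. apply in_map; auto.
  - do 6 right; left. apply in_map; auto.
  - do 7 right. apply in_map; auto. Qed.

Lemma Jl_in n U V : forall x y k, In x U -> In y V -> In k (seq 0 n) ->
  In (VA x y) (Jl n U V) /\ In (VB x y) (Jl n U V) /\ In (VT x y k) (Jl n U V).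
Proof. intros x y k Hx Hy Hk. unfold Jl. rewrite !in_app_iff, !in_flat_map.
  repeat split.
  - left. exists x; split; auto; apply in_map; auto.
  - right; left. exists x; split; auto; apply in_map; auto.
  - do 2 right. exists x; split; auto. apply in_flat_map. exists y; split; auto; apply in_map; auto. Qed.

Lemma weak_f n U V u v al be f : inD1 n f -> (forall x, In x U -> inX n x) -> (forall y, In y V -> inX n y) ->
  M4 U V u v al be -> Rabs (integ U u f - integ V v f) <= cost n U V al be.
Proof.
  intros [_ Hf] HU HV [Hnn [Ha Hb]].
  assert (E : integ U u f - integ V v f = lsum U (fun x => lsum V (fun y => al x y * f x - be x y * f y))).
  { setoid_rewrite lsum_minus. rewrite lsum_minus. unfold integ. f_equal.
    - apply lsum_ext. intros x Hx. rewrite <- Ha by auto. rewrite Rmult_comm, <- lsum_scal.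
      apply lsum_ext; intros; ring.
    - rewrite lsum_swap. apply lsum_ext. intros y Hy. rewrite <- Hb by auto. rewrite Rmult_comm, <- lsum_scal.
      apply lsum_ext; intros; ring. }
  rewrite E. unfold cost. apply Rabs_le. split.
  - rewrite <- lsum_opp. apply lsum_le. intros x Hx. rewrite <- lsum_opp. apply lsum_le. intros y Hy.
    destruct (Hnn x y Hx Hy) as [H1 H2].
    assert (be x y * f y - al x y * f x <= l1 n (fun k => be x y * y k - al x y * x k)) by (apply Hf; auto).
    assert (l1 n (fun k => be x y * y k - al x y * x k) = l1 n (fun k => al x y * x k - be x y * y k)).
    { unfold l1. rewrite !rsum_lsum. apply lsum_ext; intros. apply Rabs_minus_sym. }
    lra.
  - apply lsum_le. intros x Hx. apply lsum_le. intros y Hy. destruct (Hnn x y Hx Hy) as [H1 H2].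
    apply Hf; auto.
Qed.

Theorem theorem2 (n : nat) (U V : list point) (u v : point -> R) :
  (0 < n)%nat ->
  fin_prob n U u -> fin_prob n V v ->
  exists m : R,
    dstar_is n U V u v m /\
    (exists alpha beta, M4 U V u v alpha beta /\ cost n U V alpha beta = m) /\
    (forall alpha beta, M4 U V u v alpha beta -> m <= cost n U V alpha beta).
Proof.
  intros Hn [NDU [HU HUs]] [NDV [HV HVs]].
  assert (H0s : In 0%nat (seq 0 n)) by (apply in_seq; lia).
  assert (EU : exists xa, In xa U) by (destruct U; [rewrite lsum_nil in HUs; lra| eexists; left; eauto]).
  assert (EV : exists ya, In ya V) by (destruct V; [rewrite lsum_nil in HVs; lra| eexists; left; eauto]).
  destruct EU as [xa Hxa]. destruct EV as [ya Hya].
  assert (NDs : NoDup (seq 0 n)) by apply seq_NoDup.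
  set (x0 := fun j => match j with VA x y => u x * v y | VB x y => u x * v y
                        | VT x y k => Rabs (u x * v y * x k - u x * v y * y k) end).
  set (y0 := fun i => match i with C3 _ _ _ => 1 | C6 _ => 1 | C7 _ => 1 | _ => 0 end).
  assert (P0 : pfeas (Jl n U V) (Il n U V) Amat (bvec u v) x0).
  { intros i Hi. change (row n U V i x0 <= bvec u v i).
    destruct (Il_cases n U V i Hi) as
      [[x [y [Hx [Hy ->]]]] | [[x [y [Hx [Hy ->]]]] | [[x [y [k [Hx [Hy [Hk ->]]]]]] |
       [[x [y [k [Hx [Hy [Hk ->]]]]]] | [[x [Hx ->]] | [[x [Hx ->]] | [[y [Hy ->]] | [y [Hy ->]]]]]]]]];
    try destruct (HU x Hx) as [_ Hux]; try destruct (HV y Hy) as [_ Hvy].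
    - rewrite R1 by auto. simpl. nra.
    - rewrite R2 by auto. simpl. nra.
    - rewrite R3 by auto. simpl. pose proof (Rle_abs (u x * v y * x k - u x * v y * y k)). lra.
    - rewrite R4 by auto. simpl. pose proof (Rle_abs (- (u x * v y * x k - u x * v y * y k))).
      rewrite Rabs_Ropp in H. lra.
    - rewrite R5 by auto. simpl. rewrite lsum_scal, HVs. lra.
    - rewrite R6 by auto. simpl. rewrite lsum_scal, HVs. lra.
    - rewrite R7 by auto. simpl. rewrite (lsum_ext U _ (fun x => v y * u x)) by (intros; ring).
      rewrite lsum_scal, HUs. lra.
    - rewrite R8 by auto. simpl. rewrite (lsum_ext U _ (fun x => v y * u x)) by (intros; ring).
      rewrite lsum_scal, HUs. lra. }
  assert (D0 : dfeas (Jl n U V) (Il n U V) Amat cvec y0).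
  { split. intros i _; destruct i; simpl; lra.
    intros j Hj. change (col n U V j y0 + cvec j = 0).
    destruct (Jl_cases n U V j Hj) as [[x [y [Hx [Hy ->]]]]|[[x [y [Hx [Hy ->]]]]|[x [y [k [Hx [Hy [Hk ->]]]]]]]].
    - rewrite CA by auto. simpl. setoid_rewrite Rmult_1_l. setoid_rewrite Rmult_0_l. rewrite lsum_0.
      replace (lsum (seq 0 n) (fun k => x k)) with (rsum n x) by (rewrite rsum_lsum; reflexivity).
      destruct (HU x Hx) as [[_ [_ H]] _]. rewrite H. ring.
    - rewrite CB by auto. simpl. setoid_rewrite Rmult_1_l. setoid_rewrite Rmult_0_l. rewrite lsum_0.
      replace (lsum (seq 0 n) (fun k => y k)) with (rsum n y) by (rewrite rsum_lsum; reflexivity).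
      destruct (HV y Hy) as [[_ [_ H]] _]. rewrite H. ring.
    - rewrite CT by auto. simpl. ring. }
  destruct (strong_lp (Jl n U V) (Il n U V) Amat (bvec u v) cvec (ND_Jl n U V NDU NDV) (ND_Il n U V NDU NDV)
             x0 y0 P0 D0) as [xv [yv [Px [[Dy0 Dy] Hobj]]]].
  assert (Hrow : forall i, In i (Il n U V) -> row n U V i xv <= bvec u v i) by exact Px.
  assert (Hcol : forall j, In j (Jl n U V) -> col n U V j yv + cvec j = 0) by exact Dy.
  set (al := fun x y => xv (VA x y)). set (be := fun x y => xv (VB x y)).
  set (Lam := fun x y k => yv (C3 x y k) - yv (C4 x y k)).
  set (phi := fun x => yv (C6 x) - yv (C5 x)). set (psi := fun y => yv (C7 y) - yv (C8 y)).
  assert (HM : M4 U V u v al be).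
  { split; [|split].
    - intros x y Hx Hy. destruct (Il_in n U V x y 0 Hx Hy H0s) as [I1 [I2 _]].
      pose proof (Hrow _ I1) as H1. pose proof (Hrow _ I2) as H2.
      rewrite R1 in H1 by auto. rewrite R2 in H2 by auto. simpl in H1, H2. unfold al, be. lra.
    - intros x Hx. destruct (Il_in n U V x ya 0 Hx Hya H0s) as [_ [_ [_ [_ [I5 [I6 _]]]]]].
      pose proof (Hrow _ I5) as H5. pose proof (Hrow _ I6) as H6.
      rewrite R5 in H5 by auto. rewrite R6 in H6 by auto. simpl in H5, H6. unfold al. lra.
    - intros y Hy. destruct (Il_in n U V xa y 0 Hxa Hy H0s) as [_ [_ [_ [_ [_ [_ [I7 I8]]]]]]].
      pose proof (Hrow _ I7) as H7. pose proof (Hrow _ I8) as H8.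
      rewrite R7 in H7 by auto. rewrite R8 in H8 by auto. simpl in H7, H8. unfold be. lra. }
  assert (HLam : forall x y k, In x U -> In y V -> (k < n)%nat -> Rabs (Lam x y k) <= 1).
  { intros x y k Hx Hy Hk. assert (Hk' : In k (seq 0 n)) by (apply in_seq; lia).
    destruct (Il_in n U V x y k Hx Hy Hk') as [_ [_ [I3 [I4 _]]]].
    destruct (Jl_in n U V x y k Hx Hy Hk') as [_ [_ J3]].
    pose proof (Hcol _ J3) as H. rewrite CT in H by auto. simpl in H.
    pose proof (Dy0 _ I3). pose proof (Dy0 _ I4). unfold Lam. apply Rabs_le. lra. }
  assert (Hphi : forall x y, In x U -> In y V -> phi x <= lin n (Lam x y) x).
  { intros x y Hx Hy. destruct (Il_in n U V x y 0 Hx Hy H0s) as [I1 _].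
    destruct (Jl_in n U V x y 0 Hx Hy H0s) as [J1 _].
    pose proof (Hcol _ J1) as H. rewrite CA in H by auto. simpl in H.
    pose proof (Dy0 _ I1). unfold lin, Lam, phi. rewrite rsum_lsum.
    rewrite (lsum_ext _ _ (fun k => yv (C3 x y k) * x k - yv (C4 x y k) * x k)) by (intros; ring).
    rewrite lsum_minus. lra. }
  assert (Hpsi : forall x y, In x U -> In y V -> lin n (Lam x y) y <= psi y).
  { intros x y Hx Hy. destruct (Il_in n U V x y 0 Hx Hy H0s) as [_ [I2 _]].
    destruct (Jl_in n U V x y 0 Hx Hy H0s) as [_ [J2 _]].
    pose proof (Hcol _ J2) as H. rewrite CB in H by auto. simpl in H.
    pose proof (Dy0 _ I2). unfold lin, Lam, psi. rewrite rsum_lsum.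
    rewrite (lsum_ext _ _ (fun k => yv (C3 x y k) * y k - yv (C4 x y k) * y k)) by (intros; ring).
    rewrite lsum_minus. lra. }
  set (G := fun x => lmin (lin n (Lam x ya)) V (fun y => lin n (Lam x y))).
  set (f := lmax (G xa) U G).
  assert (HG : forall x, In x U -> good n (G x)).
  { intros x Hx. apply lmin_good. apply lin_good; auto. intros y Hy. apply lin_good; auto. }
  assert (Hf : good n f) by (apply lmax_good; auto).
  assert (Hflo : forall x, In x U -> phi x <= f x).
  { intros x Hx. eapply Rle_trans; [|apply (lmax_ge (G xa) U G x x Hx)].
    apply lmin_ge; auto. }
  assert (Hfhi : forall y, In y V -> f y <= psi y).
  { intros y Hy. apply lmax_le.
    - eapply Rle_trans; [apply (lmin_le _ V _ y y Hy)|]. apply Hpsi; auto.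
    - intros x Hx. eapply Rle_trans; [apply (lmin_le _ V _ y y Hy)|]. apply Hpsi; auto. }
  assert (Ecobj : cobj (Jl n U V) cvec xv =
     lsum U (fun x => lsum V (fun y => lsum (seq 0 n) (fun k => xv (VT x y k))))).
  { unfold cobj. rewrite lsum_Jl. cbn [cvec]. setoid_rewrite Rmult_0_l. setoid_rewrite Rmult_1_l.
    rewrite ?lsum_0. try setoid_rewrite lsum_0. rewrite ?lsum_0. ring. }
  assert (Ebobj : bobj (Il n U V) (bvec u v) yv =
     - (lsum U (fun x => u x * phi x) - lsum V (fun y => v y * psi y))).
  { unfold bobj. rewrite lsum_Il. cbn [bvec]. setoid_rewrite Rmult_0_l.
    rewrite ?lsum_0. try setoid_rewrite lsum_0. rewrite ?lsum_0. try setoid_rewrite lsum_0. rewrite ?lsum_0.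
    unfold phi, psi.
    rewrite (lsum_ext U (fun x => u x * (yv (C6 x) - yv (C5 x))) (fun x => u x * yv (C6 x) - u x * yv (C5 x)))
      by (intros; ring).
    rewrite (lsum_ext V (fun y => v y * (yv (C7 y) - yv (C8 y))) (fun y => v y * yv (C7 y) - v y * yv (C8 y)))
      by (intros; ring).
    rewrite !lsum_minus.
    rewrite (lsum_ext U (fun x => - u x * yv (C6 x)) (fun x => - (u x * yv (C6 x)))) by (intros; ring).
    rewrite (lsum_ext V (fun x => - v x * yv (C8 x)) (fun x => - (v x * yv (C8 x)))) by (intros; ring).
    rewrite !lsum_opp. ring. }
  assert (Hcost : cost n U V al be <= lsum U (fun x => lsum V (fun y => lsum (seq 0 n) (fun k => xv (VT x y k))))).
  { unfold cost. apply lsum_le; intros x Hx. apply lsum_le; intros y Hy. unfold l1. rewrite rsum_lsum.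
    apply lsum_le. intros k Hk. destruct (Il_in n U V x y k Hx Hy Hk) as [_ [_ [I3 [I4 _]]]].
    pose proof (Hrow _ I3) as H3. pose proof (Hrow _ I4) as H4.
    rewrite R3 in H3 by auto. rewrite R4 in H4 by auto. simpl in H3, H4. unfold al, be. apply Rabs_le. lra. }
  assert (Hint : lsum U (fun x => u x * phi x) - lsum V (fun y => v y * psi y) <= integ U u f - integ V v f).
  { unfold integ. assert (lsum U (fun x => u x * phi x) <= lsum U (fun x => u x * f x)).
    { apply lsum_le; intros x Hx. apply Rmult_le_compat_l. left; apply HU; auto. apply Hflo; auto. }
    assert (lsum V (fun y => v y * f y) <= lsum V (fun y => v y * psi y)).
    { apply lsum_le; intros y Hy. apply Rmult_le_compat_l. left; apply HV; auto. apply Hfhi; auto. }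
    lra. }
  assert (Hmain : cost n U V al be <= Rabs (integ U u f - integ V v f)).
  { rewrite Ecobj, Ebobj in Hobj. eapply Rle_trans; [|apply Rle_abs]. lra. }
  assert (HUX : forall x, In x U -> inX n x) by (intros; apply HU; auto).
  assert (HVX : forall y, In y V -> inX n y) by (intros; apply HV; auto).
  exists (cost n U V al be). split; [|split].
  - split.
    + intros r [g [Hg ->]]. apply weak_f; auto.
    + intros bnd Hb. eapply Rle_trans; [exact Hmain|]. apply Hb. exists f. split; auto. apply good_D1; auto.
  - exists al, be. split; auto.
  - intros a' b' M'. eapply Rle_trans; [exact Hmain|]. apply weak_f; auto. apply good_D1; auto.
Qed.
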